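(* Let $u\ge1$, $d\ge0$, $d'\ge0$ be integers. Let $T=\{T_1,\dots,T_l\}\in L(d+u,d)$ and $T'=\{T'_1,\dots,T'_l\}\in L(d'+u,d')$ satisfy $\operatorname{codim}_d(T_i)=\operatorname{codim}_{d'}(T'_i)$ for each $i$. Define $\bar\mu_{u,d}(T)=\mu_{d+u,d}(T)$. Then $\bar\mu_{u,d}(T)=\bar\mu_{u,d'}(T')$.
   Context: For a finite set $X$ let $\operatorname{codim}_d(X)=d+1-|X|$. For a finite collection $\{T_1,\dots,T_l\}$ of pairwise distinct finite sets put $\rho_d(\{T_1,\dots,T_l\})=\sum_{i=1}^l\operatorname{codim}_d(T_i)$ (with $\rho_d(\emptyset)=0$) and $D_d(\{T_1,\dots,T_l\})=\operatorname{codim}_d(T_1\cap\cdots\cap T_l)-\rho_d(\{T_1,\dots,T_l\})$. For integers $d\ge0$, $n>d$, $L(n,d)$ is the set of all collections $T$ of subsets of $\{1,\dots,n\}$ such that (i) $D_d(T')>0$ for every $T'\subset T$ with $|T'|>1$, and (ii) $0\le|T_i|\le d$ for every $T_i\in T$. It is partially ordered by: $T<T'$ iff $\rho_d(T)<\rho_d(T')$ and for every $T_i\in T$ there exists $T'_j\in T'$ with $T'_j\subset T_i$; $T\le T'$ means $T<T'$ or $T=T'$. The Möbius function $\mu_{n,d}$ of $L(n,d)$ is defined by $\mu_{n,d}(T,T)=1$ and $\sum_{S:\,T\le S\le T'}\mu_{n,d}(T,S)=0$ for $T<T'$; and $\mu_{n,d}(T):=\mu_{n,d}(\emptyset,T)$.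 *)

(* Defs.v *)
From mathcomp Require Import all_boot all_order all_algebra.
Set Implicit Arguments. Unset Strict Implicit. Unset Printing Implicit Defensive.
Import Order.TTheory GRing.Theory Num.Theory.
Local Open Scope ring_scope.

(* Subsets of {1,...,n} are represented as subsets of 'I_n = {0,...,n-1}. *)

Definition codim (d : nat) {n : nat} (X : {set 'I_n}) : int :=
  (d.+1)%:Z - (#|X|)%:Z.

Definition rho (d : nat) {n : nat} (T : {set {set 'I_n}}) : int :=
  \sum_(X in T) codim d X.

Definition bigI {n : nat} (T : {set {set 'I_n}}) : {set 'I_n} :=
  \bigcap_(X in T) X.

Definition Dd (d : nat) {n : nat} (T : {set {set 'I_n}}) : int :=
  codim d (bigI T) - rho d T.

Definition inL (n d : nat) (T : {set {set 'I_n}}) : bool :=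
  [forall T' : {set {set 'I_n}},
      ((T' \subset T) && (1 < #|T'|)%N) ==> (0 < Dd d T')]
  && [forall X in T, (#|X| <= d)%N].
Arguments inL : clear implicits.

Definition ltL (d : nat) {n : nat} (T T' : {set {set 'I_n}}) : bool :=
  (rho d T < rho d T') && [forall X in T, exists Y in T', Y \subset X].

Definition leL (d : nat) {n : nat} (T T' : {set {set 'I_n}}) : bool :=
  (T == T') || ltL d T T'.

(* Moebius function of L(n,d), computed by its defining recursion
   mu(T,T) = 1, mu(T,T') = - sum_{S in L, T <= S < T'} mu(T,S) for T < T',
   (and 0 if T is not <= T'), with a fuel argument. *)
Fixpoint mu_aux (n d : nat) (k : nat) (T T' : {set {set 'I_n}}) : int :=
  match k with
  | 0%N => 0
  | k'.+1 =>
      if T == T' then 1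
      else if ltL d T T' then
        - \sum_(S : {set {set 'I_n}} | inL n d S && leL d T S && ltL d S T')
            @mu_aux n d k' T S
      else 0
  end.

(* The fuel exceeds the length of any chain in the finite poset. *)
Definition mobius (n d : nat) (T T' : {set {set 'I_n}}) : int :=
  @mu_aux n d (#|{: {set {set 'I_n}}}|).+1 T T'.

Definition mu (n d : nat) (T : {set {set 'I_n}}) : int := @mobius n d set0 T.

Definition mubar (u d : nat) (T : {set {set 'I_(d + u)}}) : int :=
  @mu (d + u) d T.
Arguments mu_aux : clear implicits.
Arguments mobius : clear implicits.
Arguments mu : clear implicits.
Arguments mubar : clear implicits.

(* Main.v *)
Require Import Defs.
From mathcomp Require Import all_boot all_order all_algebra zify.
Set Implicit Arguments. Unset Strict Implicit. Unset Printing Implicit Defensive.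
Import Order.TTheory GRing.Theory Num.Theory.
Local Open Scope ring_scope.

Lemma rho0 d n : rho d (set0 : {set {set 'I_n}}) = 0.
Proof. by rewrite /rho big_set0. Qed.

Lemma ltL_trans d n (A B C : {set {set 'I_n}}) : ltL d A B -> ltL d B C -> ltL d A C.
Proof.
case/andP=> r1 /forallP h1; case/andP=> r2 /forallP h2.
apply/andP; split; first exact: lt_trans r1 r2.
apply/forallP=> X; apply/implyP=> XA.
have /implyP/(_ XA)/existsP[Y /andP[YB YX]] := h1 X.
have /implyP/(_ YB)/existsP[Z /andP[ZC ZY]] := h2 Y.
by apply/existsP; exists Z; rewrite ZC (subset_trans ZY YX).
Qed.

Lemma mu_stab n d : forall (k : nat) X, rho d X < k%:Z ->
  forall j, mu_aux n d (k + j) set0 X = mu_aux n d k set0 X.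
Proof.
elim=> [|k IH] X hX j.
  case: j => [|j] //=.
  have -> : (set0 == X) = false.
    apply/negbTE/eqP=> eX; move: hX; rewrite -eX rho0 //.
  have -> : ltL d set0 X = false by rewrite /ltL rho0 ltNge (ltW hX).
  by [].
rewrite addSn /=.
case: ifP => // _; case: ifP => // _.
congr (- _); apply: eq_bigr => S /andP[_ hS].
apply: IH.
move: hS => /andP[h _]; move: h hX; lia.
Qed.

Lemma mu_stab2 n d (k1 k2 : nat) X : rho d X < k1%:Z -> rho d X < k2%:Z ->
  mu_aux n d k1 set0 X = mu_aux n d k2 set0 X.
Proof.
move=> h1 h2; case: (leqP k1 k2) => hk.
  by rewrite -(subnKC hk) mu_stab.
by rewrite -(subnKC (ltnW hk)) mu_stab.
Qed.


Lemma mu_transfer n d n' d' (D : {set {set {set 'I_n}}}) (D' : {set {set {set 'I_n'}}})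
  (phi : {set {set 'I_n}} -> {set {set 'I_n'}}) :
  (forall S X, inL n d S -> ltL d S X -> X \in D -> S \in D) ->
  (forall S, S \in D -> inL n d S) ->
  (forall S X, inL n' d' S -> ltL d' S X -> X \in D' -> S \in D') ->
  (forall S, S \in D' -> inL n' d' S) ->
  set0 \in D -> phi set0 = set0 -> {in D &, injective phi} -> phi @: D = D' ->
  {in D &, forall A B, ltL d' (phi A) (phi B) = ltL d A B} ->
  forall k X, X \in D -> mu_aux n d k set0 X = mu_aux n' d' k set0 (phi X).
Proof.
move=> Dc DL D'c D'L D0 phi0 inj imD hlt.
have heq : forall S, S \in D -> (set0 == phi S) = (set0 == S).
  move=> S SD; apply/eqP/eqP => [h|<-//].
  by apply: inj => //; rewrite phi0.
have hle : forall S, S \in D -> leL d' set0 (phi S) = leL d set0 S.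
  move=> S SD; rewrite /leL heq // -phi0 hlt //.
elim=> [//|k IH] X XD /=.
have -> : ltL d' set0 (phi X) = ltL d set0 X by rewrite -phi0 hlt.
rewrite heq //.
case: ifP => // _; case: ifP => // _.
congr (- _).
pose A := [set S in D | leL d set0 S && ltL d S X].
pose A' := [set S in D' | leL d' set0 S && ltL d' S (phi X)].
have -> : \sum_(S | inL n d S && leL d set0 S && ltL d S X) mu_aux n d k set0 S
   = \sum_(S in A) mu_aux n d k set0 S.
  apply: eq_bigl => S; rewrite inE.
  apply/idP/idP => [/andP[/andP[h1 h2] h3]|/andP[h1 /andP[h2 h3]]].
    by rewrite h2 h3 (Dc S X).
  by rewrite h2 h3 DL.
have -> : \sum_(S | inL n' d' S && leL d' set0 S && ltL d' S (phi X)) mu_aux n' d' k set0 S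
   = \sum_(S in A') mu_aux n' d' k set0 S.
  apply: eq_bigl => S; rewrite inE.
  apply/idP/idP => [/andP[/andP[h1 h2] h3]|/andP[h1 /andP[h2 h3]]].
    rewrite h2 h3 (D'c S (phi X)) //; by rewrite -imD; apply: imset_f.
  by rewrite h2 h3 D'L.
have AD : forall S, S \in A -> S \in D by move=> S; rewrite inE => /andP[].
have -> : A' = phi @: A.
  apply/setP => S'; apply/idP/idP.
    rewrite inE => /andP[]; rewrite -imD => /imsetP[S SD ->].
    rewrite hle // hlt // => h; apply: imset_f; by rewrite inE SD.
  case/imsetP => S SA ->; rewrite inE; move: SA; rewrite inE => /andP[SD h].
  by rewrite -imD imset_f //= hle // hlt.
rewrite big_imset /=; last by move=> a b /AD ha /AD hb; apply: inj.
by apply: eq_bigr => S /AD SD; rewrite IH.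
Qed.


Lemma inL_D n d (S R : {set {set 'I_n}}) : inL n d S -> R \subset S -> (1 < #|R|)%N -> 0 < Dd d R.
Proof. by case/andP=> /forallP/(_ R) h _ RS R1; move: h; rewrite RS R1. Qed.

Lemma inL_card n d (S : {set {set 'I_n}}) X : inL n d S -> X \in S -> (#|X| <= d)%N.
Proof. by case/andP=> _ /forall_inP h /h. Qed.

Lemma card_bigcup_le (T : finType) (I : finType) (P : pred I) (A : I -> {set T}) :
  (#|\bigcup_(i | P i) A i| <= \sum_(i | P i) #|A i|)%N.
Proof.
apply: (big_rec2 (fun (x : {set T}) (y : nat) => #|x| <= y)%N); first by rewrite cards0.
move=> i x y _ h; apply: leq_trans (leq_card_setU _ _) _; exact: leq_add.
Qed.

Section OneSide.
Variables (n d l : nat) (f : 'I_l -> {set 'I_n}).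
Hypothesis hf : injective f.
Hypothesis hT : inL n d (f @: setT).

Lemma f_small i : (#|f i| <= d)%N.
Proof. by apply: (inL_card hT); apply: imset_f. Qed.

Lemma uniq_grp (Y : {set 'I_n}) i j : (#|Y| <= d)%N -> f i \subset Y -> f j \subset Y -> i = j.
Proof.
move=> hY hi hj; apply/eqP; apply/negPn/negP => ne.
have fne : f i != f j by apply: contra ne => /eqP /hf ->.
have := inL_D hT (R := [set f i; f j]).
rewrite cards2 fne => /(_ _ isT).
have -> : [set f i; f j] \subset f @: setT.
  by apply/subsetP => x; rewrite !inE => /orP[]/eqP->; apply: imset_f.
move=> /(_ isT).
have eI : bigI [set f i; f j] = f i :&: f j.
  apply/setP => x; rewrite inE; apply/bigcapP/andP => [h|[h1 h2] X].
    by split; apply: h; rewrite !inE eqxx ?orbT.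
  by rewrite !inE => /orP[]/eqP->.
have er : rho d [set f i; f j] = codim d (f i) + codim d (f j).
  by rewrite /rho big_setU1 ?inE //= big_set1.
rewrite /Dd eI er /codim.
have := cardsUI (f i) (f j).
have : (#|f i :|: f j| <= #|Y|)%N by apply: subset_leq_card; rewrite subUset hi hj.
lia.
Qed.

Lemma inL_groups (S : {set {set 'I_n}}) :
  (forall Y, Y \in S -> (#|Y| <= d)%N) ->
  (forall Y, Y \in S -> exists i, f i \subset Y) ->
  (forall (R : {set {set 'I_n}}) i, R \subset S -> (1 < #|R|)%N ->
      (forall Y, Y \in R -> f i \subset Y) -> 0 < Dd d R) ->
  inL n d S.
Proof.
move=> Ssmall Sgrp Hgrp; apply/andP; split; last first.
  by apply/forall_inP => Y; apply: Ssmall.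
apply/forallP => R; apply/implyP => /andP[RS R1].
case: (boolP [exists i, [forall Y in R, f i \subset Y]]) => [/existsP[i /forall_inP hi]|hno].
  exact: Hgrp RS R1 hi.
have grp : forall Y, Y \in R -> exists i, f i \subset Y.
  by move=> Y YR; apply: Sgrp; apply: (subsetP RS).
have uq : forall Y i j, Y \in R -> f i \subset Y -> f j \subset Y -> i = j.
  by move=> Y i j YR; apply: uniq_grp; apply: Ssmall; apply: (subsetP RS).
pose I := [set i | [exists Y in R, f i \subset Y]].
pose Ri i := [set Y in R | f i \subset Y].
pose Z i := bigI (Ri i).
have ea : rho d R = \sum_(i in I) rho d (Ri i).
  rewrite /rho.
  have -> : \sum_(i in I) \sum_(X in Ri i) codim d X =
            \sum_(i in I) \sum_(X in R) (if f i \subset X then codim d X else 0).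
    apply: eq_bigr => i _; rewrite -big_mkcondr /=; apply: eq_bigl => X.
    by rewrite inE.
  rewrite exchange_big /=; apply: eq_bigr => Y YR.
  have [i0 hi0] := grp Y YR.
  have i0I : i0 \in I by rewrite inE; apply/existsP; exists Y; rewrite YR hi0.
  rewrite (bigD1 i0) //= hi0 big1 ?addr0 //.
  move=> i /andP[_ ne]; case: ifP => // h.
  by move: ne; rewrite (uq Y i i0 YR h hi0) eqxx.
have eb : forall i, i \in I -> rho d (Ri i) <= codim d (Z i).
  move=> i; rewrite inE => /existsP[Y0 /andP[Y0R hY0]].
  have Y0Ri : Y0 \in Ri i by rewrite inE Y0R hY0.
  case: (ltnP 1 #|Ri i|) => h.
    have RiS : Ri i \subset S.
      by apply/subsetP => X; rewrite inE => /andP[XR _]; apply: (subsetP RS).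
    have Rif : forall Y, Y \in Ri i -> f i \subset Y by move=> X; rewrite inE => /andP[].
    have := Hgrp (Ri i) i RiS h Rif.
    by rewrite /Dd subr_gt0 => H; apply/ltW.
  have : #|Ri i| == 1%N.
    by rewrite eqn_leq h card_gt0; apply/set0Pn; exists Y0.
  case/cards1P => Y eY.
  by rewrite /Z /bigI eY /rho !big_set1.
have ec : bigI R = \bigcap_(i in I) Z i.
  apply/setP => x; apply/bigcapP/bigcapP => [h i iI|h Y YR].
    by apply/bigcapP => Y; rewrite inE => /andP[YR _]; apply: h.
  have [i hi] := grp Y YR.
  have iI : i \in I by rewrite inE; apply/existsP; exists Y; rewrite YR hi.
  by have /bigcapP := h i iI; apply; rewrite inE YR hi.
have I2 : (1 < #|I|)%N.
  have : R != set0 by rewrite -card_gt0; apply: ltn_trans R1.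
  case/set0Pn => Y0 Y0R; have [i0 hi0] := grp Y0 Y0R.
  have : ~~ [forall Y in R, f i0 \subset Y] by apply: contra hno => h; apply/existsP; exists i0.
  rewrite negb_forall_in => /exists_inP[Y1 Y1R hY1].
  have [i1 hi1] := grp Y1 Y1R.
  have ne : i0 != i1 by apply: contra hY1 => /eqP->.
  have : [set i0; i1] \subset I.
    apply/subsetP => i; rewrite !inE => /orP[]/eqP->; apply/existsP.
      by exists Y0; rewrite Y0R hi0.
    by exists Y1; rewrite Y1R hi1.
  by move/subset_leq_card; rewrite cards2 ne.
pose F := \bigcap_(i in I) f i.
have injI : {in I &, injective f} by move=> a b _ _; apply: hf.
have ed : 0 < codim d F - \sum_(i in I) codim d (f i).
  have := inL_D hT (R := f @: I).
  rewrite card_in_imset // I2 imsetS ?subsetT // => /(_ isT isT).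
  by rewrite /Dd /bigI /rho !big_imset.
have fZ : forall i, f i \subset Z i.
  by move=> i; apply/subsetP => x xf; apply/bigcapP => Y; rewrite inE => /andP[_ /subsetP]; apply.
pose Z' := \bigcap_(i in I) Z i.
have FZ' : F \subset Z'.
  apply/subsetP => x /bigcapP h; apply/bigcapP => i iI; apply: (subsetP (fZ i)); exact: h.
have ef : (#|Z'| - #|F| <= \sum_(i in I) (#|Z i| - #|f i|))%N.
  rewrite -cardsDS //.
  have : Z' :\: F \subset \bigcup_(i in I) (Z i :\: f i).
    apply/subsetP => x; rewrite inE => /andP[xF /bigcapP xZ].
    case: (boolP [exists i in I, x \notin f i]) => [/exists_inP[i iI xf]|].
      by apply/bigcupP; exists i => //; rewrite inE xf xZ.
    move=> hh; exfalso; move/negP: xF; apply; apply/bigcapP => i iI.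
    by apply/negPn; apply: contra hh => xf; apply/exists_inP; exists i.
  move/subset_leq_card => h; apply: leq_trans h _.
  apply: leq_trans (card_bigcup_le _ _) _.
  by apply: leq_sum => i _; rewrite cardsDS.
have eZ : forall i, codim d (Z i) = codim d (f i) - ((#|Z i| - #|f i|)%N)%:Z.
  move=> i; rewrite /codim; have := subset_leq_card (fZ i); lia.
have hsum : \sum_(i in I) codim d (Z i) =
    \sum_(i in I) codim d (f i) - ((\sum_(i in I) (#|Z i| - #|f i|))%N)%:Z.
  rewrite (eq_bigr _ (fun i _ => eZ i)) sumrB; congr (_ - _).
  by rewrite (big_morph Posz PoszD erefl).
have hr : rho d R <= \sum_(i in I) codim d (Z i) by rewrite ea; apply: ler_sum.
rewrite /Dd ec -/Z'.
move: ed hr hsum ef (subset_leq_card FZ'); rewrite /codim.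
lia.
Qed.

End OneSide.


Definition tbij (T1 T2 : finType) (x0 : T1) (A : {set T1}) (B : {set T2}) (y : T2) : T1 :=
  nth x0 (enum A) (index y (enum B)).

Lemma tbij_props (T1 T2 : finType) (x0 : T1) (A : {set T1}) (B : {set T2}) :
  #|A| = #|B| ->
  [/\ forall y, y \in B -> tbij x0 A B y \in A, {in B &, injective (tbij x0 A B)}
    & tbij x0 A B @: B = A].
Proof.
move=> hc.
have hi : forall y, y \in B -> (index y (enum B) < size (enum A))%N.
  by move=> y yB; rewrite -cardE hc cardE index_mem mem_enum.
have h1 : forall y, y \in B -> tbij x0 A B y \in A.
  by move=> y yB; rewrite -mem_enum /tbij mem_nth // hi.
have h2 : {in B &, injective (tbij x0 A B)}.
  move=> y1 y2 y1B y2B /eqP; rewrite /tbij nth_uniq ?hi ?enum_uniq // => /eqP e.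
  by rewrite -{1}(nth_index y1 (x:=y1) (s:=enum B)) ?mem_enum // e nth_index ?mem_enum.
split=> //; apply/eqP; rewrite eqEcard card_in_imset // hc leqnn andbT.
by apply/subsetP => x /imsetP[y yB ->]; apply: h1.
Qed.

Section TwoSides.
Variables (n d n' d' l : nat) (f : 'I_l -> {set 'I_n}) (g : 'I_l -> {set 'I_n'}).
Hypothesis hf : injective f.
Hypothesis hg : injective g.
Hypothesis hT : inL n d (f @: setT).
Hypothesis hT' : inL n' d' (g @: setT).
Variable x0 : 'I_n.
Hypothesis hn : (n + d' = n' + d)%N.
Hypothesis hcod : forall i, codim d (f i) = codim d' (g i).

Lemma hcomp i : #|~: f i| = #|~: g i|.
Proof.
have := cardsC (f i); have := cardsC (g i); rewrite !card_ord.
have := hcod i; rewrite /codim.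
have := f_small hT i; have := f_small hT' i. lia.
Qed.

Definition tau i := tbij x0 (~: f i) (~: g i).

Lemma tau_in i y : y \notin g i -> tau i y \notin f i.
Proof. by have [h _ _] := tbij_props x0 (hcomp i); move=> hy; have := h y; rewrite !inE => ->. Qed.

Lemma tau_inj i : {in ~: g i &, injective (tau i)}.
Proof. by have [_ h _] := tbij_props x0 (hcomp i). Qed.

Lemma tau_onto i x : x \notin f i -> exists2 y, y \notin g i & tau i y = x.
Proof.
have [_ _ h] := tbij_props x0 (hcomp i).
move=> xf; have : x \in ~: f i by rewrite inE.
by rewrite -h => /imsetP[y]; rewrite inE => yg ->; exists y.
Qed.

Definition Phii i (Y : {set 'I_n}) : {set 'I_n'} := [set y | (y \in g i) || (tau i y \in Y)].

Lemma Phii_sup i (Y : {set 'I_n}) : g i \subset Phii i Y.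
Proof. by apply/subsetP => y yg; rewrite inE yg. Qed.

Lemma Phii_card i (Y : {set 'I_n}) : f i \subset Y -> #|Phii i Y| = (#|g i| + (#|Y| - #|f i|))%N.
Proof.
move=> fY.
pose W := [set y in ~: g i | tau i y \in Y].
have eP : Phii i Y = g i :|: W.
  apply/setP => y; rewrite !inE; by case: (y \in g i).
have eW : tau i @: W = Y :\: f i.
  apply/setP => x; apply/imsetP/idP.
    case=> y; rewrite !inE => /andP[yg yY] ->; rewrite yY andbT; exact: tau_in.
  rewrite inE => /andP[xf xY]; have [y yg ey] := tau_onto xf.
  by exists y; rewrite ?ey // !inE yg ey xY.
have cW : #|W| = #|Y :\: f i|.
  rewrite -eW card_in_imset //; move=> a b; rewrite !inE => /andP[ha _] /andP[hb _].
  by apply: tau_inj; rewrite inE.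
have dis : g i :&: W = set0.
  by apply/setP => y; rewrite !inE; case: (y \in g i).
by rewrite eP cardsU dis cards0 subn0 cW cardsDS.
Qed.

Lemma Phii_codim i (Y : {set 'I_n}) : f i \subset Y -> codim d' (Phii i Y) = codim d Y.
Proof.
move=> fY; have := hcod i; rewrite /codim Phii_card //.
have := subset_leq_card fY; lia.
Qed.

Lemma Phii_sub i (Y1 Y2 : {set 'I_n}) : f i \subset Y1 -> f i \subset Y2 ->
  (Phii i Y1 \subset Phii i Y2) = (Y1 \subset Y2).
Proof.
move=> h1 h2; apply/subsetP/subsetP => H x.
  move=> xY1; case: (boolP (x \in f i)) => xf; first exact: (subsetP h2).
  have [y yg ey] := tau_onto xf.
  have : y \in Phii i Y1 by rewrite inE ey xY1 orbT.
  by move/H; rewrite inE (negbTE yg) ey.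
by rewrite !inE => /orP[->//|/H ->]; rewrite orbT.
Qed.

Lemma Phii_cap i (R : {set {set 'I_n}}) : R != set0 ->
  \bigcap_(Y in R) Phii i Y = Phii i (bigI R).
Proof.
case/set0Pn => Y0 Y0R; apply/setP => y; rewrite inE.
apply/bigcapP/idP => [h|].
  case: (boolP (y \in g i)) => //= yg; apply/bigcapP => Y YR.
  by have := h Y YR; rewrite inE (negbTE yg).
case/orP => [yg Y _|/bigcapP h Y YR]; rewrite inE ?yg //.
by rewrite h ?orbT.
Qed.

Definition good (Y : {set 'I_n}) := (#|Y| <= d)%N && [exists i, f i \subset Y].
Definition good' (Y : {set 'I_n'}) := (#|Y| <= d')%N && [exists i, g i \subset Y].

Definition Phi (Y : {set 'I_n}) : {set 'I_n'} :=
  if [pick i | f i \subset Y] is Some i then Phii i Y else set0.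

Lemma Phi_eq (Y : {set 'I_n}) i : good Y -> f i \subset Y -> Phi Y = Phii i Y.
Proof.
case/andP=> hY _ fY; rewrite /Phi; case: pickP => [j fj|/(_ i)]; last by rewrite fY.
by rewrite (uniq_grp hf hT hY fj fY).
Qed.

Lemma Phi_good (Y : {set 'I_n}) i : good Y -> f i \subset Y ->
  [/\ good' (Phi Y), g i \subset Phi Y & codim d' (Phi Y) = codim d Y].
Proof.
move=> gY fY; rewrite (Phi_eq gY fY); have cd := Phii_codim fY.
have gs := Phii_sup i Y.
split=> //; apply/andP; split; last by apply/existsP; exists i.
move: cd; case/andP: gY => hY _; rewrite /codim; lia.
Qed.

Lemma good_ex (Y : {set 'I_n}) : good Y -> exists i, f i \subset Y.
Proof. by case/andP=> _ /existsP. Qed.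

Lemma Phi_sub (Y1 Y2 : {set 'I_n}) : good Y1 -> good Y2 -> (Phi Y1 \subset Phi Y2) = (Y1 \subset Y2).
Proof.
move=> g1 g2; have [i1 h1] := good_ex g1; have [i2 h2] := good_ex g2.
have [gP2 s2 _] := Phi_good g2 h2; have [_ s1 _] := Phi_good g1 h1.
apply/idP/idP => H.
  have e : i1 = i2.
    apply: (uniq_grp hg hT' (Y := Phi Y2)); first by case/andP: gP2.
      exact: subset_trans s1 H.
    exact: s2.
  by move: H; rewrite (Phi_eq g1 h1) (Phi_eq g2 h2) e Phii_sub // -e.
have e : i1 = i2.
  apply: (uniq_grp hf hT (Y := Y2)); first by case/andP: g2.
    exact: subset_trans h1 H.
  exact: h2.
by rewrite (Phi_eq g1 h1) (Phi_eq g2 h2) -e Phii_sub // e.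
Qed.

Lemma Phi_inj : {in good &, injective Phi}.
Proof.
move=> Y1 Y2 g1 g2 e; apply/eqP; rewrite eqEsubset -!Phi_sub // e.
by rewrite !subxx.
Qed.

Definition gsetb (S : {set {set 'I_n}}) := [forall Y in S, good Y].
Local Notation phi S := (Phi @: S).

Lemma Phi_inS (S : {set {set 'I_n}}) : gsetb S -> {in S &, injective Phi}.
Proof. by move=> /forall_inP h a b /h ga /h gb; apply: Phi_inj. Qed.

Lemma phi_rho S : gsetb S -> rho d' (phi S) = rho d S.
Proof.
move=> gS; rewrite /rho big_imset; last exact: Phi_inS.
apply: eq_bigr => Y YS; have gY : good Y by move/forall_inP: gS; apply.
by have [i h] := good_ex gY; have [_ _ ->] := Phi_good gY h.
Qed.

Lemma phi_good S Y' : gsetb S -> Y' \in phi S -> good' Y'.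
Proof.
 move=> /forall_inP gS /imsetP[Y YS ->]; have gY := gS Y YS.
by have [i h] := good_ex gY; have [] := Phi_good gY h.
Qed.

Lemma phi_ref S1 S2 : gsetb S1 -> gsetb S2 ->
  [forall X in phi S1, exists Y in phi S2, Y \subset X] =
  [forall X in S1, exists Y in S2, Y \subset X].
Proof.
move=> /forall_inP g1 /forall_inP g2.
apply/idP/idP => /forall_inP H; apply/forall_inP => X XS.
  have := H (Phi X) (imset_f Phi XS).
   case/exists_inP => Y' /imsetP[Y YS ->] hs.
  by apply/exists_inP; exists Y => //; rewrite -(Phi_sub (g2 _ YS) (g1 _ XS)).
move: XS; move=> /imsetP[X0 X0S ->]; have /exists_inP[Y YS hs] := H X0 X0S.
by apply/exists_inP; exists (Phi Y); rewrite ?imset_f // (Phi_sub (g2 _ YS) (g1 _ X0S)).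
Qed.

Lemma phi_lt S1 S2 : gsetb S1 -> gsetb S2 -> ltL d' (phi S1) (phi S2) = ltL d S1 S2.
Proof. by move=> h1 h2; rewrite /ltL !phi_rho // phi_ref. Qed.

Lemma phi_inj S1 S2 : gsetb S1 -> gsetb S2 -> phi S1 = phi S2 -> S1 = S2.
Proof.
move=> h1 h2 e.
have H : forall A B, gsetb A -> gsetb B -> phi A = phi B -> A \subset B.
  move=> A B /forall_inP gA /forall_inP gB eAB; apply/subsetP => Y YA.
  have : Phi Y \in phi B by rewrite -eAB imset_f.
  by case/imsetP => Y' Y'B eY; rewrite (Phi_inj (gA _ YA) (gB _ Y'B) eY).
by apply/eqP; rewrite eqEsubset !H.
Qed.

Lemma phi_L S : inL n d S -> gsetb S -> inL n' d' (phi S).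
Proof.
move=> LS gS; have gS' := gS; move/forall_inP: gS' => gY.
apply: (inL_groups hg hT').
- by move=> Y' /(phi_good gS)/andP[].
- by move=> Y' /imsetP[Y YS ->]; have [i h] := good_ex (gY Y YS); exists i; have [] := Phi_good (gY Y YS) h.
move=> R' i R'S R'1 hR'.
pose R := [set Y in S | Phi Y \in R'].
have RS : R \subset S by apply/subsetP => Y; rewrite inE => /andP[].
have gR : gsetb R by apply/forall_inP => Y /(subsetP RS) /gY.
have eR : phi R = R'.
  apply/setP => Y'; apply/imsetP/idP => [[Y] |Y'R].
    by rewrite inE => /andP[_ h] ->.
  have := subsetP R'S _ Y'R; case/imsetP => Y YS eY; exists Y => //.
  by rewrite inE YS -eY.
have fR : forall Y, Y \in R -> f i \subset Y.
  move=> Y YR; have gYY := gY Y (subsetP RS _ YR).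
  have [j hj] := good_ex gYY; have [gP sj _] := Phi_good gYY hj.
  have PR : Phi Y \in R' by move: YR; rewrite inE => /andP[].
  have := hR' _ PR => si.
  by rewrite (uniq_grp hg hT' (Y := Phi Y) _ si sj) //; case/andP: gP.
have cR : #|R| = #|R'| by rewrite -eR card_in_imset //; apply: Phi_inS.
have R0 : R != set0 by rewrite -card_gt0 cR; apply: ltn_trans R'1.
have := inL_D LS RS; rewrite cR => /(_ R'1).
rewrite -eR /Dd phi_rho //.
suff -> : codim d' (bigI (phi R)) = codim d (bigI R) by [].
have -> : bigI (phi R) = \bigcap_(Y in R) Phii i Y.
  rewrite /bigI big_imset /=; last exact: Phi_inS.
  apply: eq_bigr => Y YR; apply: Phi_eq; last exact: fR.
  by move/forall_inP: gR; apply.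
rewrite Phii_cap // Phii_codim //.
by apply/subsetP => x xf; apply/bigcapP => Y /fR /subsetP; apply.
Qed.

Lemma phi_T : phi (f @: setT) = g @: setT.
Proof.
rewrite -imset_comp; apply: eq_imset => i /=.
have gf : good (f i) by rewrite /good f_small //; apply/existsP; exists i.
rewrite (Phi_eq gf (subxx _)); apply/setP => y; rewrite inE.
case: (boolP (y \in g i)) => //= yg; apply/negbTE; exact: tau_in.
Qed.

End TwoSides.


Lemma rho_le n d (S : {set {set 'I_n}}) : inL n d S -> rho d S <= (d.+1)%:Z.
Proof.
move=> LS; case: (ltnP 1 #|S|) => h.
  have := inL_D LS (subxx S) h; rewrite /Dd /codim subr_gt0 => H.
  apply: ltW; apply: lt_le_trans H _; lia.
move: h; rewrite leq_eqVlt ltnS leqn0 => /orP[/cards1P[X ->]| /eqP/cards0_eq ->].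
  by rewrite /rho big_set1 /codim; lia.
by rewrite rho0.
Qed.

Lemma card_big n : (n <= #|{: {set {set 'I_n}}}|)%N.
Proof.
have := @leq_card _ _ (fun i : 'I_n => [set [set i]]).
rewrite card_ord; apply => a b /set1_inj /set1_inj.
done.
Qed.

Section Final.
Variables (n d n' d' l : nat) (f : 'I_l -> {set 'I_n}) (g : 'I_l -> {set 'I_n'}).
Hypothesis hf : injective f.
Hypothesis hg : injective g.
Hypothesis hT : inL n d (f @: setT).
Hypothesis hT' : inL n' d' (g @: setT).
Variable x0 : 'I_n.
Hypothesis hn : (n + d' = n' + d)%N.
Hypothesis hcod : forall i, codim d (f i) = codim d' (g i).

Definition DD := [set S | inL n d S && leL d S (f @: setT)].
Definition DD' := [set S | inL n' d' S && leL d' S (g @: setT)].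

Local Notation phi S := (Phi f g x0 @: S).

Lemma D_gset S : S \in DD -> gsetb d f S.
Proof.
rewrite inE => /andP[LS hle]; apply/forall_inP => Y YS.
rewrite /good (inL_card LS YS) /=; apply/existsP.
case/orP: hle => [/eqP eS|/andP[_ /forall_inP /(_ Y YS) /exists_inP[Z ZT ZY]]].
  by move: YS; rewrite eS => /imsetP[i _ ->]; exists i.
by case/imsetP: ZT ZY => i _ ->; exists i.
Qed.

Lemma TD : f @: setT \in DD.
Proof. by rewrite inE hT /leL eqxx. Qed.

Lemma phi_D S : S \in DD -> phi S \in DD'.
Proof.
move=> SD; have gS := D_gset SD; have gT := D_gset TD.
move: (SD); rewrite !inE => /andP[LS hle].
rewrite (phi_L hf hg hT hT' x0 hn hcod LS gS) /=.
case/orP: hle => [/eqP ->|h]; first by rewrite (phi_T hf hT hT' x0 hn hcod) /leL eqxx.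
by rewrite /leL -(phi_T hf hT hT' x0 hn hcod) (phi_lt hf hg hT hT' x0 hn hcod gS gT) h orbT.
Qed.

Lemma phi_injD : {in DD &, injective (fun S : {set {set 'I_n}} => phi S)}.
Proof.
move=> a b ha hb; apply: (phi_inj hf hg hT hT' (x0:=x0) hn hcod); exact: D_gset.
Qed.

Lemma card_D : (#|DD| <= #|DD'|)%N.
Proof.
rewrite -(card_in_imset phi_injD); apply: subset_leq_card.
by apply/subsetP => S' /imsetP[S SD ->]; apply: phi_D.
Qed.

Hypothesis hcard : (#|DD'| <= #|DD|)%N.
Hypothesis hdn : (d < n)%N.
Hypothesis hdn' : (d' < n')%N.

Lemma final : mobius n d set0 (f @: setT) = mobius n' d' set0 (g @: setT).
Proof.
have ltT : ltL d set0 (f @: setT) = (f @: setT != set0).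
  rewrite /ltL rho0; apply/andP/idP => [[h _]|ne].
    by apply: contraTneq h => ->; rewrite rho0 ltxx.
  split; last by apply/forall_inP => X; rewrite inE.
  case/set0Pn: ne => X XT; rewrite /rho (bigD1 X) //=.
  have hX := inL_card hT XT.
  have : 0 <= \sum_(i in f @: setT | i != X) codim d i.
    by apply: sumr_ge0 => Y /andP[YT _]; have := inL_card hT YT; rewrite /codim; lia.
  set s := \sum_(i in _ | _) _; have : 0 < codim d X by rewrite /codim; lia.
  lia.
have D0 : set0 \in DD.
  rewrite inE /leL ltT eq_sym orbN andbT.
  apply/andP; split; last by apply/forall_inP => X; rewrite inE.
  by apply/forallP => R; apply/implyP => /andP[]; rewrite subset0 => /eqP -> ; rewrite cards0.
have Dc : forall (S X : {set {set 'I_n}}), inL n d S -> ltL d S X -> X \in DD -> S \in DD.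
  move=> S X LS hlt; rewrite !inE LS => /andP[_ /orP[/eqP <-|h]].
    by rewrite /leL hlt orbT.
  by rewrite /leL (ltL_trans hlt h) orbT.
have D'c : forall (S X : {set {set 'I_n'}}), inL n' d' S -> ltL d' S X -> X \in DD' -> S \in DD'.
  move=> S X LS hlt; rewrite !inE LS => /andP[_ /orP[/eqP <-|h]].
    by rewrite /leL hlt orbT.
  by rewrite /leL (ltL_trans hlt h) orbT.
have imD : [set phi S | S : {set {set 'I_n}} in DD] = DD'.
  apply/eqP; rewrite eqEcard card_in_imset ?hcard ?andbT; last exact: phi_injD.
  by apply/subsetP => S' /imsetP[S SD ->]; apply: phi_D.
have DL : forall S, S \in DD -> inL n d S by move=> S; rewrite inE => /andP[].
have D'L : forall S, S \in DD' -> inL n' d' S by move=> S; rewrite inE => /andP[].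
have key := @mu_transfer n d n' d' DD DD' (fun S => phi S) Dc DL D'c D'L
   D0 (imset0 _) phi_injD imD.
have key2 := key (fun A B hA hB => phi_lt hf hg hT hT' x0 hn hcod (D_gset hA) (D_gset hB)).
pose K := (d.+1 + d'.+1)%N.
have r1 := rho_le hT; have r2 := rho_le hT'.
rewrite /mobius (@mu_stab2 n d (#|{: {set {set 'I_n}}}|.+1) K (f @: setT)); last 2 first.
- have := card_big n; move: r1; lia.
- move: r1; lia.
rewrite (key2 K _ TD) (phi_T hf hT hT' x0 hn hcod).
rewrite (@mu_stab2 n' d' K (#|{: {set {set 'I_n'}}}|.+1) (g @: setT)); first by [].
- move: r2; lia.
- have := card_big n'; move: r2; lia.
Qed.

End Final.

Local Close Scope ring_scope.

Theorem corollary4p3 (u d d' l : nat) (hu : (1 <= u)%N)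
  (f : 'I_l -> {set 'I_(d + u)}) (g : 'I_l -> {set 'I_(d' + u)})
  (hf : injective f) (hg : injective g)
  (hT : inL (d + u) d (f @: [set: 'I_l]))
  (hT' : inL (d' + u) d' (g @: [set: 'I_l]))
  (hcod : forall i : 'I_l, codim d (f i) = codim d' (g i)) :
  mubar u d (f @: [set: 'I_l]) = mubar u d' (g @: [set: 'I_l]).
Proof.
rewrite /mubar /mu.
have x0 : 'I_(d + u) := Ordinal (ltn_addl d hu).
have x0' : 'I_(d' + u) := Ordinal (ltn_addl d' hu).
have hn : ((d + u) + d' = (d' + u) + d)%N by lia.
have hn' : ((d' + u) + d = (d + u) + d')%N by lia.
have hcod' : forall i, codim d' (g i) = codim d (f i) by move=> i; rewrite hcod.
have hc := card_D hg hf hT' hT x0' hn' hcod'.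
apply: (final hf hg hT hT' x0 hn hcod).
- by move: hc; rewrite /DD /DD'.
- by rewrite -{1}(addn0 d) ltn_add2l.
- by rewrite -{1}(addn0 d') ltn_add2l.
Qed.
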